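(* Neither $\sim_{hpb}\subseteq\sim_{\mathrm{t}\mu}$ nor $\sim_{\mathrm{t}\mu}\subseteq\sim_{hpb}$: there exist systems $\mathfrak T_1,\mathfrak T_2$ with $\mathfrak T_1\sim_{hpb}\mathfrak T_2$ but $\mathfrak T_1\not\sim_{\mathrm{t}\mu}\mathfrak T_2$, and there exist systems $\mathfrak T_3,\mathfrak T_4$ with $\mathfrak T_3\sim_{\mathrm{t}\mu}\mathfrak T_4$ but $\mathfrak T_3\not\sim_{hpb}\mathfrak T_4$.
   Context: A system (TSI) is $\mathfrak T=(S,s_0,T,I,\Sigma)$ with states $S$, initial $s_0$, labels $\Sigma$, transitions $T\subseteq S\times\Sigma\times S$, irreflexive symmetric independence $I\subseteq T\times T$ satisfying: with $(s,a,s_1)\prec(s_2,a,q)$ iff $\exists b$: $(s,a,s_1)I(s,b,s_2)$, $(s,a,s_1)I(s_1,b,q)$, $(s,b,s_2)I(s_2,a,q)$ and $\sim$ its equivalence closure, (A1) $(s,a,s_1)\sim(s,a,s_2)\Rightarrow s_1=s_2$; (A2) $(s,a,s_1)I(s,b,s_2)\Rightarrow\exists q.\,(s,a,s_1)I(s_1,b,q)\wedge(s,b,s_2)I(s_2,a,q)$; (A3) $(s,a,s_1)I(s_1,b,q)\Rightarrow\exists s_2.\,(s,a,s_1)I(s,b,s_2)\wedge(s,b,s_2)I(s_2,a,q)$; (A4) $t\sim t'\Rightarrow\{u:tIu\}=\{u:t'Iu\}$; systems are image-finite. For $t=(s,a,s')$: $\sigma(t)=s,\tau(t)=s',\delta(t)=a$.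 Relations: $t\otimes t'$ iff $\sigma(t)=\sigma(t')\wedge tIt'$; $t\ominus t'$ iff $\tau(t)=\sigma(t')\wedge tIt'$; $t\le t'$ iff $\tau(t)=\sigma(t')\wedge\neg tIt'$. Processes: $\mathfrak X(s)$ = transitions with source $s$; conflict-free set = set of transitions with common source, pairwise $\otimes$; support sets = the $\mathfrak X(s)$ and non-empty conflict-free sets; $M\sqsubseteq R$ iff $M\subseteq R$ and no $t\in R\setminus M$ has $t\otimes t'$ for all $t'\in M$; $\mathcal X$ = all $\mathfrak X(s)$ and all support sets $M\sqsubseteq\mathfrak X(s)$; $\mathfrak A=T\cup\{t_\epsilon\}$ with fresh $t_\epsilon$, $\tau(t_\epsilon)=s_0$, $t_\epsilon\le t$ whenever $\sigma(t)=s_0$, never $t_\epsilon\ominus t$; $\mathfrak S=\mathcal X\times\mathfrak A$, initial process $(\mathfrak X(s_0),t_\epsilon)$. Trace modal mu-calculus equivalence $\sim_{\mathrm{t}\mu}$: systems are equivalent iff their initial processes satisfy the same closed fixpoint-free formulas $\phi::=\mathrm{tt}\mid\neg\phi\mid\phi\wedge\phi\mid\langle a\rangle\phi\mid\langle\otimes\rangle\phi$ with $[\![\langle a\rangle\phi]\!]=\{(R,t):\exists r\in R.\ \delta(r)=a,\ (t\le r\text{ or }t\ominus r),\ (\mathfrak X(\tau(r)),r)\in[\![\phi]\!]\}$, $[\![\langle\otimes\rangle\phi]\!]=\{(R,t):\exists M\in\mathcal X.\ M\sqsubseteq R,\ (M,t)\in[\![\phi]\!]\}$, and boolean connectives interpreted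 as usual in $\mathfrak S$. $\sim_{hpb}$: runs are finite sequences $[t_1,\dots,t_k]$ with $\sigma(t_1)=s_0$, $\sigma(t_{i+1})=\tau(t_i)$; $\varrho(\pi)$ is the last transition (empty run $\epsilon$ ends at $s_0$; its ''last transition'' is independent of nothing). The labelled poset of a run: elements $1..k$ labelled $\delta(t_i)$, order the reflexive-transitive closure of $\{(i,j):i<j,\neg t_iIt_j\}$. $(\pi_1.u,\pi_2.v)$ is synchronous iff $(\varrho(\pi_1),u)\in I_1\Leftrightarrow(\varrho(\pi_2),v)\in I_2$ and the labelled posets of $\pi_1.u,\pi_2.v$ are isomorphic. hpb game from $(\epsilon,\epsilon)$: Adam picks a system and a transition $u$ from the end state of the current run there; Eve answers with an equally labelled transition $v$ from the end state of the current run in the other system so that the extended pair is synchronous; a player unable to move loses; infinite plays are won by Eve. $\mathfrak T_1\sim_{hpb}\mathfrak T_2$ iff Eve has a winning strategy. *)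

(* Defs.v *)
From Stdlib Require Import List Relations.
Import ListNotations.
Set Implicit Arguments.

Record TSI (L : Type) : Type := MkTSI {
  st : Type;
  s0 : st;
  tr : st -> L -> st -> Prop;
  ind : (st * L * st) -> (st * L * st) -> Prop
}.
Arguments s0 {L} _.
Arguments tr {L} _ _ _ _.
Arguments ind {L} _ _ _.

Section Sys.
Variables (L : Type) (T : TSI L).

Definition trn : Type := (st T * L * st T)%type.
Definition src (t : trn) : st T := fst (fst t).
Definition tgt (t : trn) : st T := snd t.
Definition lab (t : trn) : L := snd (fst t).
Definition is_trans (t : trn) : Prop := tr T (src t) (lab t) (tgt t).

Definition prec (t u : trn) : Prop :=
  exists (s s1 s2 q : st T) (a b : L),
    t = (s, a, s1) /\ u = (s2, a, q) /\
    ind T (s, a, s1) (s, b, s2) /\ ind T (s, a, s1) (s1, b, q) /\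
    ind T (s, b, s2) (s2, a, q).

Definition simt : trn -> trn -> Prop := clos_refl_sym_trans trn prec.

Definition is_TSI : Prop :=
  (forall t u, ind T t u -> is_trans t /\ is_trans u) /\
  (forall t, ~ ind T t t) /\
  (forall t u, ind T t u -> ind T u t) /\
  (forall s a s1 s2, simt (s, a, s1) (s, a, s2) -> s1 = s2) /\
  (forall s a b s1 s2, ind T (s, a, s1) (s, b, s2) ->
     exists q, ind T (s, a, s1) (s1, b, q) /\ ind T (s, b, s2) (s2, a, q)) /\
  (forall s a b s1 q, ind T (s, a, s1) (s1, b, q) ->
     exists s2, ind T (s, a, s1) (s, b, s2) /\ ind T (s, b, s2) (s2, a, q)) /\
  (forall t t', simt t t' -> forall u, ind T t u <-> ind T t' u) /\
  (forall s a, exists l : list (st T), forall s', tr T s a s' -> In s' l).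

Definition tset := trn -> Prop.

Definition otimes (t t' : trn) : Prop := src t = src t' /\ ind T t t'.
Definition ominus (t t' : trn) : Prop := tgt t = src t' /\ ind T t t'.
Definition leT (t t' : trn) : Prop := tgt t = src t' /\ ~ ind T t t'.

Definition Xs (s : st T) : tset := fun t => is_trans t /\ src t = s.

Definition set_eq (A B : tset) : Prop := forall t, A t <-> B t.

Definition conflict_free (M : tset) : Prop :=
  (exists s, forall t, M t -> is_trans t /\ src t = s) /\
  (forall t t', M t -> M t' -> t <> t' -> otimes t t').

Definition support (M : tset) : Prop :=
  (exists s, set_eq M (Xs s)) \/ ((exists t, M t) /\ conflict_free M).

Definition sqsub (M R : tset) : Prop :=
  (forall t, M t -> R t) /\
  ~ (exists t, R t /\ ~ M t /\ forall t', M t' -> otimes t t').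

Definition inX (M : tset) : Prop :=
  (exists s, set_eq M (Xs s)) \/ (support M /\ exists s, sqsub M (Xs s)).

(* \mathfrak A = T + {t_eps}; None encodes t_eps *)
Definition leA (t : option trn) (r : trn) : Prop :=
  match t with None => src r = s0 T | Some t => leT t r end.
Definition ominusA (t : option trn) (r : trn) : Prop :=
  match t with None => False | Some t => ominus t r end.

End Sys.

Inductive form (L : Type) : Type :=
| FTT : form L
| FNeg : form L -> form L
| FAnd : form L -> form L -> form L
| FDia : L -> form L -> form L
| FOt : form L -> form L.
Arguments FTT {L}.

Fixpoint sat {L : Type} {T : TSI L} (R : tset T) (t : option (trn T))
  (phi : form L) {struct phi} : Prop :=
  match phi with
  | FTT => True
  | FNeg p => ~ sat R t p
  | FAnd p q => sat R t p /\ sat R t q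
  | FDia a p => exists r, R r /\ lab r = a /\ (leA t r \/ ominusA t r) /\
                  sat (Xs (tgt r)) (Some r) p
  | FOt p => exists M : tset T, inX M /\ sqsub M R /\ sat M t p
  end.

Definition tmu_equiv (L : Type) (T1 T2 : TSI L) : Prop :=
  forall phi : form L,
    sat (@Xs L T1 (s0 T1)) None phi <-> sat (@Xs L T2 (s0 T2)) None phi.

Section Runs.
Variables (L : Type) (T : TSI L).

Definition rho (p : list (trn T)) : option (trn T) := last (map Some p) None.
Definition endst (p : list (trn T)) : st T :=
  match rho p with None => s0 T | Some t => tgt t end.
Definition indopt (o : option (trn T)) (u : trn T) : Prop :=
  match o with None => False | Some t => ind T t u end.

(* immediate causality between positions i < j of a run (0-based) *)
Definition rstep (p : list (trn T)) (i j : nat) : Prop :=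
  i < j /\ exists ti tj, nth_error p i = Some ti /\ nth_error p j = Some tj /\
                         ~ ind T ti tj.
Definition rord (p : list (trn T)) : nat -> nat -> Prop :=
  clos_refl_trans nat (rstep p).
End Runs.

Definition poset_iso (L : Type) (T1 T2 : TSI L)
  (p1 : list (trn T1)) (p2 : list (trn T2)) : Prop :=
  length p1 = length p2 /\
  exists f : nat -> nat,
    (forall i, i < length p1 -> f i < length p2) /\
    (forall i j, i < length p1 -> j < length p1 -> f i = f j -> i = j) /\
    (forall i, i < length p1 ->
       option_map (@lab L T1) (nth_error p1 i) =
       option_map (@lab L T2) (nth_error p2 (f i))) /\
    (forall i j, i < length p1 -> j < length p1 ->
       (rord p1 i j <-> rord p2 (f i) (f j))).

Definition synchronous (L : Type) (T1 T2 : TSI L)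
  (p1 : list (trn T1)) (u : trn T1) (p2 : list (trn T2)) (v : trn T2) : Prop :=
  (indopt (rho p1) u <-> indopt (rho p2) v) /\
  poset_iso (p1 ++ [u]) (p2 ++ [v]).

(* Eve has a winning strategy from position (p1, p2): every Adam move (in
   either system) has a legal synchronous answer from which Eve again wins;
   coinductive, since infinite plays are won by Eve. *)
CoInductive eve_wins {L : Type} {T1 T2 : TSI L} :
  list (trn T1) -> list (trn T2) -> Prop :=
| eve_step (p1 : list (trn T1)) (p2 : list (trn T2)) :
  (forall u, is_trans u -> src u = endst p1 ->
     exists v, is_trans v /\ src v = endst p2 /\ lab v = lab u /\
       synchronous p1 u p2 v /\ eve_wins (p1 ++ [u]) (p2 ++ [v])) ->
  (forall v, is_trans v -> src v = endst p2 ->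
     exists u, is_trans u /\ src u = endst p1 /\ lab u = lab v /\
       synchronous p1 u p2 v /\ eve_wins (p1 ++ [u]) (p2 ++ [v])) ->
  eve_wins p1 p2.

Definition hpb_equiv (L : Type) (T1 T2 : TSI L) : Prop := @eve_wins L T1 T2 [] [].

(* Main.v *)
Require Import Defs.
From Stdlib Require Import List Relations Bool Classical.
Import ListNotations.

Definition clsof {St Lb C : Type} (cls : St -> Lb -> St -> option C)
  (t : St * Lb * St) : option C :=
  match t with (s, a, s') => cls s a s' end.
Definition trb {St Lb C : Type} (cls : St -> Lb -> St -> option C)
  (s : St) (a : Lb) (s' : St) : bool :=
  match cls s a s' with Some _ => true | None => false end.
Definition gindb {St Lb C : Type} (cls : St -> Lb -> St -> option C)
  (part : C -> C -> bool) (t u : St * Lb * St) : bool :=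
  match clsof cls t, clsof cls u with Some x, Some y => part x y | _, _ => false end.
Definition mkT {St Lb C : Type} (s00 : St) (cls : St -> Lb -> St -> option C)
  (part : C -> C -> bool) : TSI Lb :=
  {| st := St; s0 := s00; tr := fun s a s' => trb cls s a s' = true;
     ind := fun t u => gindb cls part t u = true |}.

Lemma simt_cls {St Lb C : Type} (s00 : St) (cls : St -> Lb -> St -> option C)
  (part : C -> C -> bool)
  (Hsym : forall x y, part x y = part y x)
  (Huniq : forall x y z, part y x = true -> part y z = true -> x = z) :
  forall t u, simt (T := mkT s00 cls part) t u ->
    t = u \/ (clsof cls t = clsof cls u /\ clsof cls t <> None).
Proof.
  intros t u H. induction H as [x y Hp | x | x y _ IH | x y z _ IH1 _ IH2].
  - destruct Hp as (s & s1 & s2 & q & a & b & -> & -> & H1 & H2 & H3).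
    right. simpl in *. unfold gindb in *. simpl in *.
    destruct (cls s a s1) as [x|]; [|discriminate].
    destruct (cls s b s2) as [y|]; [|discriminate].
    destruct (cls s2 a q) as [z|]; [|discriminate].
    rewrite Hsym in H1. rewrite (Huniq _ _ _ H1 H3). split; congruence.
  - left; reflexivity.
  - destruct IH as [->|[E N]]; [left; reflexivity | right; split; congruence].
  - destruct IH1 as [->|[E1 N1]]; destruct IH2 as [->|[E2 N2]]; auto.
    right; split; congruence.
Qed.

Lemma mk_TSI {St Lb C : Type} (s00 : St) (cls : St -> Lb -> St -> option C)
  (part : C -> C -> bool)
  (Hirr : forall x, part x x = false)
  (Hsym : forall x y, part x y = part y x)
  (Huniq : forall x y z, part y x = true -> part y z = true -> x = z)
  (HA1 : forall s a s1 s2 c, cls s a s1 = Some c -> cls s a s2 = Some c -> s1 = s2)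
  (HA2 : forall s a b s1 s2, gindb cls part (s,a,s1) (s,b,s2) = true ->
     exists q, gindb cls part (s,a,s1) (s1,b,q) = true /\ gindb cls part (s,b,s2) (s2,a,q) = true)
  (HA3 : forall s a b s1 q, gindb cls part (s,a,s1) (s1,b,q) = true ->
     exists s2, gindb cls part (s,a,s1) (s,b,s2) = true /\ gindb cls part (s,b,s2) (s2,a,q) = true)
  (allS : list St) (allS_ok : forall s, In s allS) :
  is_TSI (mkT s00 cls part).
Proof.
  unfold is_TSI. repeat split.
  - destruct t as [[s a] s']. destruct u as [[r b] r']. simpl in *. unfold gindb, is_trans, trb, src, lab, tgt in *.
    simpl in *. destruct (cls s a s'); [reflexivity|discriminate].
  - destruct t as [[s a] s']. destruct u as [[r b] r']. simpl in *. unfold gindb, is_trans, trb, src, lab, tgt in *.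
    simpl in *. destruct (cls s a s'); [|discriminate]. destruct (cls r b r'); [reflexivity|discriminate].
  - intros t H. destruct t as [[s a] s']. simpl in H. unfold gindb in H. simpl in H.
    destruct (cls s a s'); [|discriminate]. rewrite Hirr in H. discriminate.
  - intros t u H. destruct t as [[s a] s']. destruct u as [[r b] r']. simpl in *. unfold gindb in *.
    simpl in *. destruct (cls s a s'); [|discriminate]. destruct (cls r b r'); [|discriminate].
    rewrite Hsym; exact H.
  - intros s a s1 s2 H. destruct (simt_cls s00 cls part Hsym Huniq _ _ H) as [E|[E N]].
    + injection E; auto.
    + simpl in E, N. destruct (cls s a s1) as [c|] eqn:E1; [|congruence].
      apply (HA1 s a s1 s2 c); congruence.
  - exact HA2.
  - exact HA3.
  - destruct (simt_cls s00 cls part Hsym Huniq _ _ H) as [->|[E N]]; [tauto|].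
    simpl. unfold gindb. rewrite E. tauto.
  - destruct (simt_cls s00 cls part Hsym Huniq _ _ H) as [->|[E N]]; [tauto|].
    simpl. unfold gindb. rewrite E. tauto.
  - intros s a. exists allS. intros; apply allS_ok.
Qed.

Inductive St1 := S0 | A1 | A2 | A3 | B1 | B2 | B3 | Q.
Inductive L1 := la | lb | lc.
Inductive C1 := CA1 | CB1 | CA2 | CB2 | CA3 | CB3 | CC.

Definition cls1 (s : St1) (l : L1) (s' : St1) : option C1 :=
  match s, l, s' with
  | S0, la, A1 => Some CA1 | S0, lb, B1 => Some CB1 | A1, lb, Q => Some CB1 | B1, la, Q => Some CA1
  | A1, lc, Q => Some CC
  | S0, la, A2 => Some CA2 | S0, lb, B2 => Some CB2 | A2, lb, Q => Some CB2 | B2, la, Q => Some CA2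
  | B2, lc, Q => Some CC
  | S0, la, A3 => Some CA3 | S0, lb, B3 => Some CB3 | A3, lb, Q => Some CB3 | B3, la, Q => Some CA3
  | A3, lc, Q => Some CC | B3, lc, Q => Some CC
  | _, _, _ => None end.
Definition cls2 (s : St1) (l : L1) (s' : St1) : option C1 :=
  match s, s' with
  | A3, _ | B3, _ | _, A3 | _, B3 => None
  | _, _ => cls1 s l s' end.
Definition part1 (x y : C1) : bool :=
  match x, y with
  | CA1, CB1 | CB1, CA1 | CA2, CB2 | CB2, CA2 | CA3, CB3 | CB3, CA3 => true
  | _, _ => false end.

Definition Sys1 : TSI L1 := mkT S0 cls1 part1.
Definition Sys2 : TSI L1 := mkT S0 cls2 part1.

Ltac bf1 t := let s := fresh "s" in let a := fresh "a" in let s' := fresh "s'" in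
  destruct t as [[s a] s']; destruct s, a, s'.

Ltac trysts1 := first [ exists S0; split; reflexivity | exists A1; split; reflexivity
  | exists A2; split; reflexivity | exists A3; split; reflexivity
  | exists B1; split; reflexivity | exists B2; split; reflexivity
  | exists B3; split; reflexivity | exists Q; split; reflexivity ].

Definition allS1 := [S0; A1; A2; A3; B1; B2; B3; Q].

Lemma Sys1_TSI : is_TSI Sys1.
Proof.
  apply mk_TSI with (allS := allS1).
  - destruct x; reflexivity.
  - destruct x, y; reflexivity.
  - destruct x, y, z; cbn; congruence.
  - intros s a s1 s2 c H1 H2; destruct s, a, s1; cbn in H1; try discriminate;
      destruct s2; cbn in H2; congruence.
  - intros s a b s1 s2 H; destruct s, a, s1; cbn in H; try discriminate;
      destruct b, s2; cbn in H; try discriminate; trysts1.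
  - intros s a b s1 q H; destruct s, a, s1; cbn in H; try discriminate;
      destruct b, q; cbn in H; try discriminate; trysts1.
  - destruct s; simpl; tauto.
Qed.

Lemma Sys2_TSI : is_TSI Sys2.
Proof.
  apply mk_TSI with (allS := allS1).
  - destruct x; reflexivity.
  - destruct x, y; reflexivity.
  - destruct x, y, z; cbn; congruence.
  - intros s a s1 s2 c H1 H2; destruct s, a, s1; cbn in H1; try discriminate;
      destruct s2; cbn in H2; congruence.
  - intros s a b s1 s2 H; destruct s, a, s1; cbn in H; try discriminate;
      destruct b, s2; cbn in H; try discriminate; trysts1.
  - intros s a b s1 q H; destruct s, a, s1; cbn in H; try discriminate;
      destruct b, q; cbn in H; try discriminate; trysts1.
  - destruct s; simpl; tauto.
Qed.

Lemma crt_mono {A} (R R' : A -> A -> Prop) : (forall x y, R x y -> R' x y) ->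
  forall x y, clos_refl_trans A R x y -> clos_refl_trans A R' x y.
Proof.
  intros H x y Hc. induction Hc.
  - apply rt_step; auto.
  - apply rt_refl.
  - eapply rt_trans; eauto.
Qed.

Lemma iso_map {L} {T1 T2 : TSI L} (f : trn T1 -> trn T2) (p : list (trn T1)) :
  (forall x, lab (f x) = lab x) ->
  (forall x y, In x p -> In y p -> (ind T1 x y <-> ind T2 (f x) (f y))) ->
  poset_iso p (map f p).
Proof.
  intros Hl Hi. split; [rewrite length_map; reflexivity|].
  exists (fun i => i). split; [intros; rewrite length_map; auto|].
  split; [auto|]. split.
  - intros i _. rewrite nth_error_map. destruct (nth_error p i); simpl; auto.
    rewrite Hl; reflexivity.
  - intros i j _ _. split; apply crt_mono; intros x y (Hxy & ti & tj & E1 & E2 & Hn);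
      split; auto.
    + exists (f ti), (f tj). rewrite !nth_error_map, E1, E2. split; auto. split; auto.
      intro H. apply Hn. apply Hi; auto; eapply nth_error_In; eauto.
    + rewrite nth_error_map in E1, E2.
      destruct (nth_error p x) as [ti'|] eqn:F1; [|discriminate].
      destruct (nth_error p y) as [tj'|] eqn:F2; [|discriminate].
      simpl in E1, E2. injection E1; injection E2; intros; subst.
      exists ti', tj'. split; auto. split; auto.
      intro H. apply Hn. apply Hi; auto; eapply nth_error_In; eauto.
Qed.

Lemma rho_map {L} {T1 T2 : TSI L} (f : trn T1 -> trn T2) (p : list (trn T1)) :
  rho (map f p) = option_map f (rho p).
Proof.
  unfold rho. induction p as [|x p IH]; [reflexivity|].
  simpl. destruct p as [|y p]; [reflexivity|]. simpl in *. exact IH.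
Qed.

Definition g1 (s : St1) : St1 := match s with A3 => A1 | B3 => B2 | s => s end.
Definition sg (t : St1 * L1 * St1) : St1 * L1 * St1 :=
  match t with (s, a, s') => (g1 s, a, g1 s') end.

Lemma endst_map (p : list (trn Sys1)) :
  endst (T := Sys2) (map sg p) = g1 (endst (T := Sys1) p).
Proof.
  pose proof (rho_map (T1 := Sys1) (T2 := Sys2) sg p) as H.
  unfold endst. change (@map (prod (prod St1 L1) St1) (prod (prod St1 L1) St1) sg p) with (@map (trn Sys1) (trn Sys2) sg p).
  rewrite H.
  destruct (rho p) as [t|]; simpl; [|reflexivity]. destruct t as [[s a] s']; reflexivity.
Qed.

Definition tr1 (t : St1 * L1 * St1) : Prop := is_trans (T := Sys1) t.
Definition tr2 (t : St1 * L1 * St1) : Prop := is_trans (T := Sys2) t.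

Lemma F3 u : tr1 u -> tr2 (sg u).
Proof. unfold tr1, tr2. bf1 u; cbn; auto. Qed.

Lemma F2 x u : tr1 x -> tr1 u -> snd x = fst (fst u) ->
  gindb cls1 part1 x u = gindb cls2 part1 (sg x) (sg u).
Proof.
  unfold tr1. intros Hx Hu E. bf1 x; cbn in Hx; try discriminate;
  destruct u as [[s2 a2] s2']; cbn in E; subst s2; destruct a2, s2'; cbn in Hu; try discriminate;
  reflexivity.
Qed.

Lemma F1 x y z : tr1 x -> fst (fst x) = S0 -> tr1 y -> fst (fst y) = snd x ->
  tr1 z -> fst (fst z) = snd y -> False.
Proof.
  unfold tr1. intros Hx Ex Hy Ey Hz Ez. bf1 x; cbn in Hx, Ex; try discriminate;
  destruct y as [[s2 a2] s2']; cbn in Ey; subst s2; destruct a2, s2'; cbn in Hy; try discriminate;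
  destruct z as [[s3 a3] s3']; cbn in Ez; subst s3; destruct a3, s3'; cbn in Hz; discriminate.
Qed.

Lemma F4 s v : tr2 v -> fst (fst v) = g1 s -> exists u, tr1 u /\ fst (fst u) = s /\ sg u = v.
Proof.
  unfold tr1, tr2. intros Hv E. destruct v as [[s2 a2] s2']. cbn in E. subst s2.
  destruct s, a2, s2'; cbn in Hv; try discriminate;
  first [ exists (S0, la, A1); split; [reflexivity|split; reflexivity]
        | exists (S0, lb, B1); split; [reflexivity|split; reflexivity]
        | exists (S0, la, A2); split; [reflexivity|split; reflexivity]
        | exists (S0, lb, B2); split; [reflexivity|split; reflexivity]
        | exists (A1, lb, Q); split; [reflexivity|split; reflexivity]
        | exists (A1, lc, Q); split; [reflexivity|split; reflexivity]
        | exists (B1, la, Q); split; [reflexivity|split; reflexivity]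
        | exists (A2, lb, Q); split; [reflexivity|split; reflexivity]
        | exists (B2, la, Q); split; [reflexivity|split; reflexivity]
        | exists (B2, lc, Q); split; [reflexivity|split; reflexivity]
        | exists (A3, lb, Q); split; [reflexivity|split; reflexivity]
        | exists (A3, lc, Q); split; [reflexivity|split; reflexivity]
        | exists (B3, la, Q); split; [reflexivity|split; reflexivity]
        | exists (B3, lc, Q); split; [reflexivity|split; reflexivity] ].
Qed.

Definition Good (p : list (St1 * L1 * St1)) : Prop :=
  p = [] \/ (exists x, p = [x] /\ tr1 x /\ fst (fst x) = S0) \/
  (exists x y, p = [x; y] /\ tr1 x /\ tr1 y /\ fst (fst x) = S0 /\ fst (fst y) = snd x).

Lemma good_ext p u : Good p -> tr1 u -> fst (fst u) = endst (T := Sys1) p -> Good (p ++ [u]).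
Proof.
  intros [-> | [(x & -> & Hx & Ex) | (x & y & -> & Hx & Hy & Ex & Ey)]] Hu Eu.
  - right; left. exists u. auto.
  - right; right. exists x, u. auto.
  - exfalso. apply (F1 x y u); auto.
Qed.

Lemma gind_irr {St Lb C} (cls : St -> Lb -> St -> option C) part (Hirr : forall x, part x x = false) t :
  gindb cls part t t = false.
Proof. unfold gindb. destruct (clsof cls t); auto. Qed.
Lemma gind_sym {St Lb C} (cls : St -> Lb -> St -> option C) part (Hsym : forall x y, part x y = part y x) t u :
  gindb cls part t u = gindb cls part u t.
Proof. unfold gindb. destruct (clsof cls t), (clsof cls u); auto. Qed.

Lemma p1irr x : part1 x x = false. Proof. destruct x; reflexivity. Qed.
Lemma p1sym x y : part1 x y = part1 y x. Proof. destruct x, y; reflexivity. Qed.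

Lemma good_pairs p : Good p -> forall x y, In x p -> In y p ->
  (ind Sys1 x y <-> ind Sys2 (sg x) (sg y)).
Proof.
  assert (Hd : forall x, ind Sys1 x x <-> ind Sys2 (sg x) (sg x)).
  { intro x. simpl. rewrite !gind_irr by apply p1irr. tauto. }
  intros [-> | [(x & -> & Hx & Ex) | (x & y & -> & Hx & Hy & Ex & Ey)]] a b Ha Hb.
  - destruct Ha.
  - destruct Ha as [<-|[]]; destruct Hb as [<-|[]]. apply Hd.
  - simpl. destruct Ha as [<-|[<-|[]]]; destruct Hb as [<-|[<-|[]]];
      try (apply Hd).
    + rewrite (F2 x y); auto. tauto.
    + rewrite gind_sym by apply p1sym. rewrite (F2 x y); auto.
      rewrite (gind_sym cls2) by apply p1sym. tauto.
Qed.

Lemma sg_lab x : lab (T := Sys2) (sg x) = lab (T := Sys1) x.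
Proof. destruct x as [[s a] s']; reflexivity. Qed.
Lemma sg_src x : src (T := Sys2) (sg x) = g1 (src (T := Sys1) x).
Proof. destruct x as [[s a] s']; reflexivity. Qed.

Lemma good_sync p u : Good p -> tr1 u -> fst (fst u) = endst (T := Sys1) p ->
  synchronous (T1 := Sys1) (T2 := Sys2) p u (map sg p) (sg u).
Proof.
  intros Hg Hu Eu. split.
  - destruct Hg as [-> | [(x & -> & Hx & Ex) | (x & y & -> & Hx & Hy & Ex & Ey)]].
    + simpl. tauto.
    + simpl. rewrite (F2 x u); auto. tauto.
    + exfalso. apply (F1 x y u); auto.
  - change (map sg p ++ [sg u]) with (map sg p ++ map sg [u]). rewrite <- map_app.
    apply (iso_map (T1 := Sys1) (T2 := Sys2) sg); [apply sg_lab|]. apply good_pairs. apply good_ext; auto.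
Qed.

Lemma win1 : forall p q, Good p -> q = map sg p -> eve_wins (T1 := Sys1) (T2 := Sys2) p q.
Proof.
  cofix CH. intros p q Hg Hq. constructor.
  - intros u Hu Hs. exists (sg u).
    split; [apply F3; exact Hu|].
    split; [rewrite Hq, sg_src, Hs; symmetry; apply endst_map|].
    split; [apply sg_lab|].
    split; [rewrite Hq; apply good_sync; auto|].
    apply CH; [apply good_ext; auto|]. rewrite Hq, map_app. reflexivity.
  - intros v Hv Hs.
    assert (Hs' : fst (fst v) = g1 (endst (T := Sys1) p)).
    { rewrite <- endst_map, <- Hq. exact Hs. }
    destruct (F4 _ v Hv Hs') as (u & Hu & Eu & <-).
    exists u. split; [exact Hu|]. split; [exact Eu|]. split; [symmetry; apply sg_lab|].
    split; [rewrite Hq; apply good_sync; auto|].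
    apply CH; [apply good_ext; auto|]. rewrite Hq, map_app. reflexivity.
Qed.

Lemma hpb12 : hpb_equiv Sys1 Sys2.
Proof. apply win1; [left; reflexivity | reflexivity]. Qed.

Definition phic : form L1 := FDia lc FTT.
Definition phi1 : form L1 :=
  FOt (FAnd (FDia la phic) (FAnd (FDia lb phic) (FNeg (FOt (FNeg (FDia lb phic)))))).

Definition a3t : St1 * L1 * St1 := (S0, la, A3).
Definition b3t : St1 * L1 * St1 := (S0, lb, B3).

Lemma sat1 : sat (T := Sys1) (Xs (T := Sys1) S0) None phi1.
Proof.
  set (M := fun t : St1 * L1 * St1 => t = a3t \/ t = b3t).
  assert (HMX : forall t, M t -> Xs (T := Sys1) S0 t).
  { intros t [-> | ->]; split; reflexivity. }
  assert (Hsq : sqsub (T := Sys1) M (Xs (T := Sys1) S0)).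
  { split; [exact HMX|]. intros (t & Ht & Hn & Ho).
    destruct (Ho a3t (or_introl eq_refl)) as [_ Hi]. apply Hn. unfold M, a3t, b3t.
    destruct Ht as [Ht Hs]. bf1 t; cbn in Ht, Hs, Hi; try discriminate; auto. }
  exists M. split; [|split; [exact Hsq|]].
  - right. split; [|exists S0; exact Hsq].
    right. split; [exists a3t; left; reflexivity|]. split.
    + exists S0. exact HMX.
    + intros t t' [-> | ->] [-> | ->] Hne; try (elim Hne; reflexivity); split; reflexivity.
  - split; [|split].
    + exists a3t. split; [left; reflexivity|]. split; [reflexivity|]. split; [left; reflexivity|].
      exists (A3, lc, Q). split; [split; reflexivity|]. split; [reflexivity|].
      split; [left; split; [reflexivity| cbn; discriminate]|]. exact I.
    + exists b3t. split; [right; reflexivity|]. split; [reflexivity|]. split; [left; reflexivity|].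
      exists (B3, lc, Q). split; [split; reflexivity|]. split; [reflexivity|].
      split; [left; split; [reflexivity| cbn; discriminate]|]. exact I.
    + intros (M' & _ & [Hs1 Hs2] & Hn). apply Hn.
      assert (Hb : M' b3t).
      { apply NNPP. intro Hnb. apply Hs2. exists b3t. split; [right; reflexivity|]. split; auto.
        intros t' Ht'. destruct (Hs1 t' Ht') as [-> | ->]; [split; reflexivity|contradiction]. }
      exists b3t. split; [exact Hb|]. split; [reflexivity|]. split; [left; reflexivity|].
      exists (B3, lc, Q). split; [split; reflexivity|]. split; [reflexivity|].
      split; [left; split; [reflexivity| cbn; discriminate]|]. exact I.
Qed.

Lemma noc2 s c : s = A2 \/ s = B1 -> Xs (T := Sys2) s c -> lab (T := Sys2) c = lc -> False.
Proof.
  intros [-> | ->] [Hc Hs] Hl; bf1 c; cbn in Hc, Hs, Hl; discriminate.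
Qed.

Lemma pick2 r l : Xs (T := Sys2) S0 r -> lab (T := Sys2) r = l ->
  sat (T := Sys2) (Xs (T := Sys2) (tgt r)) (Some r) phic ->
  (l = la -> r = (S0, la, A1)) /\ (l = lb -> r = (S0, lb, B2)).
Proof.
  intros [Hr Hs] Hl (c & Hc & Hlc & _ & _).
  bf1 r; cbn in Hr, Hs, Hl; try discriminate; subst l;
  try (exfalso; solve [eapply noc2; [|exact Hc|exact Hlc]; auto]);
  split; intro E; try discriminate; reflexivity.
Qed.

Definition a1t : St1 * L1 * St1 := (S0, la, A1).
Definition b1t : St1 * L1 * St1 := (S0, lb, B1).

Lemma sqM' (R : St1 * L1 * St1 -> Prop) :
  R a1t -> R b1t -> (forall t, R t -> Xs (T := Sys2) S0 t) ->
  sqsub (T := Sys2) (fun t => t = a1t \/ t = b1t) R.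
Proof.
  intros Ha Hb HR. split; [intros t [-> | ->]; auto|].
  intros (t & Ht & Hn & Ho). destruct (Ho a1t (or_introl eq_refl)) as [_ Hi]. apply Hn.
  destruct (HR t Ht) as [Ht' Hs]. bf1 t; cbn in Ht', Hs, Hi; try discriminate; unfold a1t, b1t; auto.
Qed.

Lemma nsat2 : ~ sat (T := Sys2) (Xs (T := Sys2) S0) None phi1.
Proof.
  intros (M & HX & [Hs1 Hs2] & Hs).
  destruct Hs as [(r & Hr & Hl & _ & Hc) [(r' & Hr' & Hl' & _ & Hc') Hneg]].
  pose proof (proj1 (pick2 r la (Hs1 r Hr) Hl Hc) eq_refl) as Er.
  pose proof (proj2 (pick2 r' lb (Hs1 r' Hr') Hl' Hc') eq_refl) as Er'.
  subst r r'.
  assert (K : forall s, (forall t, M t <-> Xs (T := Sys2) s t) -> False).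
  { intros s E. assert (s = S0) by (destruct (proj1 (E _) Hr) as [_ Hs]; exact (eq_sym Hs)). subst s.
    apply Hneg. exists (fun t => t = a1t \/ t = b1t). split; [|split].
    - right. split.
      + right. split; [exists a1t; left; reflexivity|]. split.
        * exists S0. intros t [-> | ->]; split; reflexivity.
        * intros t t' [-> | ->] [-> | ->] Hne; try (elim Hne; reflexivity); split; reflexivity.
      + exists S0. apply sqM'; [split; reflexivity|split; reflexivity|auto].
    - apply sqM'; [apply E; split; reflexivity|apply E; split; reflexivity|intros t Ht; apply E; auto].
    - intros (r & [-> | ->] & Hl2 & _ & Hc2); [discriminate|].
      destruct Hc2 as (c & Hcc & Hlc & _). apply (noc2 B1 c); auto. }
  destruct HX as [[s E] | [[[s E] | [_ [_ Hp]]] _]]; [exact (K s E)|exact (K s E)|].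
  destruct (Hp (S0, la, A1) (S0, lb, B2) Hr Hr' ltac:(discriminate)) as [_ Hi].
  discriminate.
Qed.

Lemma ntmu12 : ~ tmu_equiv Sys1 Sys2.
Proof. intro H. apply nsat2. apply (H phi1). apply sat1. Qed.

Inductive St2 := P0 | PA | PB | PQ | PR.
Inductive L2 := a2 | b2.
Inductive C2 := Cx | Cy | Cz.

Definition cls3 (s : St2) (l : L2) (s' : St2) : option C2 :=
  match s, l, s' with
  | P0, a2, PA => Some Cx | PA, b2, PQ => Some Cy
  | P0, b2, PB => Some Cy | PB, a2, PQ => Some Cx
  | _, _, _ => None end.
Definition cls4 (s : St2) (l : L2) (s' : St2) : option C2 :=
  match s, l, s' with
  | PA, b2, PR => Some Cz
  | _, _, _ => cls3 s l s' end.
Definition part2 (x y : C2) : bool :=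
  match x, y with Cx, Cy | Cy, Cx => true | _, _ => false end.

Definition Sys3 : TSI L2 := mkT P0 cls3 part2.
Definition Sys4 : TSI L2 := mkT P0 cls4 part2.

Ltac bf2 t := let s := fresh "s" in let a := fresh "a" in let s' := fresh "s'" in
  destruct t as [[s a] s']; destruct s, a, s'.

Ltac trysts := first [ exists P0; split; reflexivity | exists PA; split; reflexivity
  | exists PB; split; reflexivity | exists PQ; split; reflexivity | exists PR; split; reflexivity ].

Lemma Sys3_TSI : is_TSI Sys3.
Proof.
  apply mk_TSI with (allS := [P0; PA; PB; PQ; PR]).
  - destruct x; reflexivity.
  - destruct x, y; reflexivity.
  - destruct x, y, z; cbn; congruence.
  - intros s a s1 s2 c H1 H2; destruct s, a, s1; cbn in H1; try discriminate;
      destruct s2; cbn in H2; congruence.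
  - intros s a b s1 s2 H; destruct s, a, s1; cbn in H; try discriminate;
      destruct b, s2; cbn in H; try discriminate; trysts.
  - intros s a b s1 q H; destruct s, a, s1; cbn in H; try discriminate;
      destruct b, q; cbn in H; try discriminate; trysts.
  - destruct s; simpl; tauto.
Qed.

Lemma Sys4_TSI : is_TSI Sys4.
Proof.
  apply mk_TSI with (allS := [P0; PA; PB; PQ; PR]).
  - destruct x; reflexivity.
  - destruct x, y; reflexivity.
  - destruct x, y, z; cbn; congruence.
  - intros s a s1 s2 c H1 H2; destruct s, a, s1; cbn in H1; try discriminate;
      destruct s2; cbn in H2; congruence.
  - intros s a b s1 s2 H; destruct s, a, s1; cbn in H; try discriminate;
      destruct b, s2; cbn in H; try discriminate; trysts.
  - intros s a b s1 q H; destruct s, a, s1; cbn in H; try discriminate;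
      destruct b, q; cbn in H; try discriminate; trysts.
  - destruct s; simpl; tauto.
Qed.

Lemma not_hpb34 : ~ hpb_equiv Sys3 Sys4.
Proof.
  unfold hpb_equiv. intro H. inversion H as [p1 p2 _ H2]; subst.
  destruct (H2 (P0, a2, PA) eq_refl eq_refl) as (u & Hu & Hs & Hl & _ & W).
  bf2 u; cbn in Hu, Hs, Hl; try discriminate.
  inversion W as [p1 p2 _ H2']; subst.
  clear Hu Hs Hl.
  destruct (H2' (PA, b2, PR) eq_refl eq_refl) as (u & Hu & Hs & Hl & [Hsy _] & _).
  bf2 u; cbn in Hu, Hs, Hl; try discriminate.
  cbn in Hsy. destruct Hsy as [Hsy _]. specialize (Hsy eq_refl). discriminate.
Qed.

Definition cur {L} {T : TSI L} (t : option (trn T)) : st T :=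
  match t with None => s0 T | Some t => tgt t end.

Lemma dia_iff {L} {T : TSI L} (R : tset T) (t : option (trn T)) a p :
  (forall r, R r -> src r = cur t) ->
  (sat R t (FDia a p) <-> exists r, R r /\ lab r = a /\ sat (Xs (tgt r)) (Some r) p).
Proof.
  intros HR. simpl. split.
  - intros (r & H1 & H2 & _ & H3). eauto.
  - intros (r & H1 & H2 & H3). exists r. repeat split; auto.
    specialize (HR r H1). destruct t as [t0|]; simpl in *.
    + destruct (classic (ind T t0 r)); [right|left]; split; auto.
    + left. exact HR.
Qed.

Definition curo (t : option (St2 * L2 * St2)) : St2 :=
  match t with None => P0 | Some t => snd t end.
Definition yy : St2 * L2 * St2 := (PA, b2, PQ).
Definition y2 : St2 * L2 * St2 := (PA, b2, PR).

Definition tr3 (t : St2 * L2 * St2) : Prop := is_trans (T := Sys3) t.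
Definition tr4 (t : St2 * L2 * St2) : Prop := is_trans (T := Sys4) t.

Lemma tr34 t : tr3 t -> tr4 t.
Proof. unfold tr3, tr4. bf2 t; cbn; auto. Qed.
Lemma tr43 t : tr4 t -> tr3 t \/ t = y2.
Proof. unfold tr3, tr4. bf2 t; cbn; auto. Qed.
Lemma y2n : ~ tr3 y2.
Proof. unfold tr3; cbn; discriminate. Qed.
Lemma ind34 t u : gindb cls3 part2 t u = gindb cls4 part2 t u.
Proof. bf2 t; bf2 u; reflexivity. Qed.

Lemma L_X3A t : Xs (T := Sys3) PA t <-> t = yy.
Proof. unfold Xs, yy. bf2 t; cbn; split; intuition (try discriminate; try congruence). Qed.
Lemma L_X4A t : Xs (T := Sys4) PA t -> t = yy \/ t = y2.
Proof. unfold Xs, yy, y2. bf2 t; cbn; intuition (try discriminate; try congruence). Qed.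
Lemma L_X4Ay : Xs (T := Sys4) PA yy.
Proof. cbn. split; reflexivity. Qed.
Lemma L_X34 s t : s <> PA -> (Xs (T := Sys3) s t <-> Xs (T := Sys4) s t).
Proof.
  intros Hs. unfold Xs. split; intros [Ht Hsr]; split; auto.
  - apply (tr34 t Ht).
  - destruct (tr43 t Ht) as [H|H]; auto. subst t. cbn in Hsr. congruence.
Qed.
Lemma L_dead3 t : ~ Xs (T := Sys3) PQ t.
Proof. unfold Xs. bf2 t; cbn; intuition (try discriminate; try congruence). Qed.
Lemma L_dead4 t s : s = PQ \/ s = PR -> ~ Xs (T := Sys4) s t.
Proof. intros [-> | ->]; unfold Xs; bf2 t; cbn; intuition (try discriminate; try congruence). Qed.
Lemma L_ot t u : otimes (T := Sys3) t u <-> otimes (T := Sys4) t u.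
Proof. unfold otimes. simpl. rewrite ind34. tauto. Qed.
Lemma L_noindA t u : Xs (T := Sys4) PA t -> Xs (T := Sys4) PA u -> ~ otimes (T := Sys4) t u.
Proof.
  intros H1 H2. destruct (L_X4A t H1) as [->| ->]; destruct (L_X4A u H2) as [->| ->];
  cbn; intros [_ H]; discriminate.
Qed.
Lemma cur3 t : cur (T := Sys3) t = curo t. Proof. destruct t; reflexivity. Qed.
Lemma cur4 t : cur (T := Sys4) t = curo t. Proof. destruct t; reflexivity. Qed.

Lemma single4 (M R : St2 * L2 * St2 -> Prop) r :
  (forall t, M t <-> t = r) -> R r -> (forall t, R t -> Xs (T := Sys4) PA t) -> sqsub (T := Sys4) M R.
Proof.
  intros HM HR HRA. split.
  - intros t Ht. apply HM in Ht. subst; auto.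
  - intros (t & Ht & Hn & Ho). apply (L_noindA t r); auto. apply Ho. apply HM; reflexivity.
Qed.
Lemma single4_inX (M : St2 * L2 * St2 -> Prop) r :
  (forall t, M t <-> t = r) -> Xs (T := Sys4) PA r -> inX (T := Sys4) M.
Proof.
  intros HM Hr. right. split.
  - right. split.
    + exists r. apply HM; reflexivity.
    + split.
      * exists PA. intros t Ht. apply HM in Ht. subst. exact Hr.
      * intros t t' H1 H2 Hn. apply HM in H1. apply HM in H2. congruence.
  - exists PA. apply single4 with r; auto.
Qed.

Lemma St2_dec (x y : St2) : {x = y} + {x <> y}.
Proof. decide equality. Qed.

Lemma cf34 M : conflict_free (T := Sys3) M -> conflict_free (T := Sys4) M.
Proof.
  intros [[s Hs] Hp]. split.
  - exists s. intros t Ht. destruct (Hs t Ht). split; auto. apply tr34; auto.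
  - intros. apply L_ot; auto.
Qed.

Lemma inX34 M : inX (T := Sys3) M -> inX (T := Sys4) M.
Proof.
  assert (K : forall s', (forall t, M t <-> Xs (T := Sys3) s' t) -> inX (T := Sys4) M).
  { intros s' E. destruct (St2_dec s' PA) as [->|Hne].
    - apply single4_inX with yy; [|apply L_X4Ay]. intro t. rewrite E. apply L_X3A.
    - left. exists s'. intro t. rewrite E. apply L_X34; auto. }
  intros [[s' E] | [Hsup [s' Hsq]]]; [eauto|].
  destruct Hsup as [[s'' E]|[Hne Hcf]]; [eauto|].
  right. split.
  - right. split; auto. apply cf34; auto.
  - exists s'. destruct Hsq as [Hs1 Hs2]. split.
    + intros t Ht. destruct (Hs1 t Ht). split; auto. apply tr34; auto.
    + intros (t & Ht & Hn & Ho). destruct Ht as [Ht Hst]. destruct (tr43 t Ht) as [H|H].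
      * apply Hs2. exists t. split; [split; auto|]. split; auto. intros t' Hm. apply L_ot; auto.
      * subst t. destruct Hne as [m Hm]. specialize (Ho m Hm). destruct Ho as [_ Ho].
        cbn in Ho. destruct m as [[ss aa] ss']. destruct ss, aa, ss'; cbn in Ho; discriminate.
Qed.

Lemma inX43 M : (forall t, M t -> tr3 t) -> inX (T := Sys4) M -> inX (T := Sys3) M.
Proof.
  intros HM.
  assert (K : forall s', (forall t, M t <-> Xs (T := Sys4) s' t) -> exists s, forall t, M t <-> Xs (T := Sys3) s t).
  { intros s' E. destruct (St2_dec s' PA) as [->|Hne].
    - exfalso. apply y2n. apply HM. apply E. cbn. split; reflexivity.
    - exists s'. intro t. rewrite E. symmetry. apply L_X34; auto. }
  intros [[s' E] | [Hsup [s' Hsq]]]; [left; eauto|].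
  right. split.
  - destruct Hsup as [[s'' E]|[Hne [[s Hs] Hp]]]; [left; eauto|].
    right. split; auto. split.
    + exists s. intros t Ht. split; [apply HM; auto | apply Hs; auto].
    + intros. apply L_ot; auto.
  - exists s'. destruct Hsq as [Hs1 Hs2]. split.
    + intros t Ht. destruct (Hs1 t Ht). split; auto. apply HM; auto.
    + intros (t & Ht & Hn & Ho). apply Hs2. exists t. destruct Ht as [Ht Hst].
      split; [split; auto; apply tr34; auto|]. split; auto. intros t' Hm. apply L_ot; auto.
Qed.

Lemma sqsub34 M (R3 R4 : St2 * L2 * St2 -> Prop) : (forall t, R3 t <-> R4 t) ->
  (sqsub (T := Sys3) M R3 <-> sqsub (T := Sys4) M R4).
Proof.
  intros HE. unfold sqsub. split; intros [H1 H2]; split.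
  - intros t Ht; apply HE; auto.
  - intros (t & Ht & Hn & Ho). apply H2. exists t. split; [apply HE; auto|]. split; auto.
    intros; apply L_ot; auto.
  - intros t Ht; apply HE; auto.
  - intros (t & Ht & Hn & Ho). apply H2. exists t. split; [apply HE; auto|]. split; auto.
    intros; apply L_ot; auto.
Qed.

Definition Rel (R3 R4 : St2 * L2 * St2 -> Prop) (t3 t4 : option (St2 * L2 * St2)) : Prop :=
  (curo t3 = curo t4 /\ (forall t, R3 t <-> R4 t) /\
     (forall t, R3 t -> tr3 t /\ fst (fst t) = curo t3))
  \/ ((forall t, ~ R3 t) /\ (forall t, ~ R4 t))
  \/ (curo t3 = PA /\ curo t4 = PA /\ (forall t, R3 t <-> t = yy) /\
      (forall t, R4 t -> Xs (T := Sys4) PA t) /\ exists r, R4 r).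

Lemma relX r : tr3 r -> Rel (Xs (T := Sys3) (snd r)) (Xs (T := Sys4) (snd r)) (Some r) (Some r).
Proof.
  intros Hr. destruct (St2_dec (snd r) PA) as [E|E].
  - right; right. cbn. rewrite E. split; [reflexivity|]. split; [reflexivity|]. split.
    + intro t; apply L_X3A.
    + split; [intros t Ht; exact Ht|]. exists yy. apply L_X4Ay.
  - left. split; [reflexivity|]. split.
    + intro t. apply L_X34; auto.
    + intros t [Ht Hs]. split; auto.
Qed.

Lemma mainbis p : forall R3 R4 t3 t4, Rel R3 R4 t3 t4 ->
  (sat (T := Sys3) R3 t3 p <-> sat (T := Sys4) R4 t4 p).
Proof.
  induction p as [| p IH | p IH q IHq | a p IH | p IH]; intros R3 R4 t3 t4 HR.
  - simpl; tauto.
  - simpl. rewrite (IH _ _ _ _ HR). tauto.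
  - simpl. rewrite (IH _ _ _ _ HR), (IHq _ _ _ _ HR). tauto.
  - destruct HR as [(Hc & HE & HR3) | [(H3 & H4) | (Hc3 & Hc4 & HE3 & HR4 & [r4 Hr4])]].
    + rewrite (dia_iff (T := Sys3) R3 t3), (dia_iff (T := Sys4) R4 t4).
      * split; intros (r & Hr & Hl & Hs); exists r.
        -- split; [apply HE; auto|]. split; auto. apply (IH _ _ _ _ (relX r (proj1 (HR3 r Hr)))); auto.
        -- assert (Hr' : R3 r) by (apply HE; auto).
           split; auto. split; auto. apply (IH _ _ _ _ (relX r (proj1 (HR3 r Hr')))); auto.
      * intros r Hr. rewrite cur4, <- Hc. apply HR3, HE; auto.
      * intros r Hr. rewrite cur3. apply HR3; auto.
    + simpl. split; intros (r & Hr & _); [elim (H3 r)|elim (H4 r)]; auto.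
    + rewrite (dia_iff (T := Sys3) R3 t3), (dia_iff (T := Sys4) R4 t4).
      * assert (Hd : Rel (Xs (T := Sys3) PQ) (Xs (T := Sys4) (snd r4)) (Some yy) (Some r4)).
        { right; left. split; [apply L_dead3|]. intro t. apply L_dead4.
          destruct (L_X4A r4 (HR4 r4 Hr4)) as [->| ->]; cbn; auto. }
        assert (Hl4 : lab (T := Sys4) r4 = b2).
        { destruct (L_X4A r4 (HR4 r4 Hr4)) as [->| ->]; reflexivity. }
        split; intros (r & Hr & Hl & Hs).
        -- apply HE3 in Hr. subst r. exists r4. split; auto. split; [rewrite Hl4; exact Hl|].
           apply (IH _ _ _ _ Hd); exact Hs.
        -- assert (Hl' : lab (T := Sys4) r = b2).
           { destruct (L_X4A r (HR4 r Hr)) as [->| ->]; reflexivity. }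
           exists yy. split; [apply HE3; auto|]. split; [rewrite <- Hl; rewrite Hl'; reflexivity|].
           assert (Hd' : Rel (Xs (T := Sys3) PQ) (Xs (T := Sys4) (snd r)) (Some yy) (Some r)).
           { right; left. split; [apply L_dead3|]. intro t. apply L_dead4.
             destruct (L_X4A r (HR4 r Hr)) as [->| ->]; cbn; auto. }
           apply (IH _ _ _ _ Hd'); exact Hs.
      * intros r Hr. rewrite cur4, Hc4. apply (HR4 r Hr).
      * intros r Hr. rewrite cur3, Hc3. apply HE3 in Hr. subst r. reflexivity.
  - destruct HR as [(Hc & HE & HR3) | [(H3 & H4) | (Hc3 & Hc4 & HE3 & HR4 & [r4 Hr4])]].
    + simpl. split; intros (M & HX & Hsq & Hs); exists M.
      * split; [apply inX34; auto|]. split; [apply (sqsub34 M R3 R4 HE); auto|].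
        apply (IH M M t3 t4); auto. left. split; auto. split; [tauto|].
        intros t Ht. apply HR3. apply (proj1 Hsq); auto.
      * assert (HM3 : forall t, M t -> R3 t) by (intros t Ht; apply HE; apply (proj1 Hsq); auto).
        split; [apply inX43; auto; intros t Ht; apply HR3; auto|].
        split; [apply (sqsub34 M R3 R4 HE); auto|].
        apply (IH M M t3 t4); auto. left. split; auto. split; [tauto|].
        intros t Ht. apply HR3. auto.
    + simpl. split; intros (M & HX & Hsq & Hs); exists (fun _ => False).
      * split; [left; exists PQ; intro t; split; [tauto|apply L_dead4; auto]|].
        split; [split; [tauto|intros (t & Ht & _); apply (H4 t Ht)]|].
        apply (IH M (fun _ => False) t3 t4); auto. right; left. split; [|tauto].
        intros t Ht. apply (H3 t). apply (proj1 Hsq); auto.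
      * split; [left; exists PQ; intro t; split; [tauto|apply L_dead3; auto]|].
        split; [split; [tauto|intros (t & Ht & _); apply (H3 t Ht)]|].
        apply (IH (fun _ => False) M t3 t4); auto. right; left. split; [tauto|].
        intros t Ht. apply (H4 t). apply (proj1 Hsq); auto.
    + simpl. split; intros (M & HX & Hsq & Hs).
      * exists (fun t => t = r4). split; [apply single4_inX with r4; [tauto|apply HR4; auto]|].
        split; [apply single4 with r4; auto; tauto|].
        apply (IH M (fun t => t = r4) t3 t4); auto. right; right.
        split; auto. split; auto. split.
        -- intro t. split.
           ++ intro Ht. apply HE3. apply (proj1 Hsq); auto.
           ++ intros ->. apply NNPP. intro Hn. apply (proj2 Hsq). exists yy.
              split; [apply HE3; auto|]. split; auto. intros t' Ht'. exfalso.
              apply Hn. assert (t' = yy) by (apply HE3; apply (proj1 Hsq); auto). subst; auto.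
        -- split; [intros t ->; apply HR4; auto|]. exists r4; reflexivity.
      * exists R3. split; [left; exists PA; intro t; rewrite HE3; symmetry; apply L_X3A|].
        split; [split; [auto|intros (t & Ht & Hn & _); contradiction]|].
        apply (IH R3 M t3 t4); auto. right; right.
        split; auto. split; auto. split; auto. split.
        -- intros t Ht. apply HR4. apply (proj1 Hsq); auto.
        -- apply NNPP. intro Hn. apply (proj2 Hsq). exists r4. split; auto. split.
           ++ intro Hm. apply Hn. exists r4; auto.
           ++ intros t' Ht'. elim Hn. exists t'; auto.
Qed.

Lemma tmu34 : tmu_equiv Sys3 Sys4.
Proof.
  intro phi. apply mainbis. left. split; [reflexivity|]. split.
  - intro t. apply L_X34. discriminate.
  - intros t [Ht Hs]. split; auto.
Qed.

Theorem proposition3 :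
  (exists (L : Type) (T1 T2 : TSI L),
      is_TSI T1 /\ is_TSI T2 /\ hpb_equiv T1 T2 /\ ~ tmu_equiv T1 T2) /\
  (exists (L : Type) (T3 T4 : TSI L),
      is_TSI T3 /\ is_TSI T4 /\ tmu_equiv T3 T4 /\ ~ hpb_equiv T3 T4).
Proof.
  split.
  - exists L1, Sys1, Sys2. split; [exact Sys1_TSI|]. split; [exact Sys2_TSI|].
    split; [exact hpb12|exact ntmu12].
  - exists L2, Sys3, Sys4. split; [exact Sys3_TSI|]. split; [exact Sys4_TSI|].
    split; [exact tmu34|exact not_hpb34].
Qed.
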